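(* Let $D=E[\max(0,v-E[v])]>0$ and let $0<c'\le D$. Put $p_{c'}=c'/D$ and let $G_{c'}$ be the cdf of the distribution placing mass $p_{c'}$ at $E[v]$ and mass $1-p_{c'}$ at $v^{\max}$. Then $U_{\text{coop}}(G_{c'})=c'$ and $U_{\text{heur}}(G_{c'})=0$, so $U_{\text{coop}}(G_{c'})-U_{\text{heur}}(G_{c'})=c'$; hence Mechanism 1 with $G_{c'}$ is truthful for every cost $c<c'$. Moreover, the principal's expected loss (when the agent plays the cooperative strategy) $L_{\text{net}}(G_{c'})=E\big[\int_{[v^{\min},v]}(v-r)\,dG_{c'}(r)\big]$ equals $c'$. More generally, for every $G\in\mathcal{G}$, $L_{\text{net}}(G)=U_{\text{coop}}(G)=E[\widehat G(v)]$.
   Context: $v$ is a random variable supported in $[v^{\min},v^{\max}]$, $0\le v^{\min}<v^{\max}$. $\mathcal{G}$ is the set of cdfs of probability measures on $[v^{\min},v^{\max}]$, $\widehat G(x)=\int_{v^{\min}}^xG(r)\,dr$. Mechanism 1: the principal secretly draws a price $r$ (from $G$, in the limit where the $\epsilon$-uniform perturbation vanishes), the agent bids $b$, and if $b\ge r$ the agent gets the object (common value $v$) and pays $r$. $U_{\text{coop}}(G)=E\big[\sup_{b}\int_{[v^{\min},b]}(v-r)\,dG(r)\big]$, $U_{\text{heur}}(G)=\sup_{b}\int_{[v^{\min},b]}(E[v]-r)\,dG(r)$; Mechanism 1 is truthful for cost $c$ if $U_{\text{coop}}(G)-U_{\text{heur}}(G)>c$. The principal's loss when the object is sold at price $r$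 is $v-r$. *)

(* Defs.v *)
From HB Require Import structures.
From mathcomp Require Import all_boot all_order all_algebra.
From mathcomp Require Import all_classical all_reals all_analysis.
Set Implicit Arguments. Unset Strict Implicit. Unset Printing Implicit Defensive.
Import Order.TTheory GRing.Theory Num.Theory.
Local Open Scope classical_set_scope.
Local Open Scope ring_scope.

Section Mechanism.
Variables (R : realType) (d : measure_display) (T : measurableType d).
Variable (P : probability T R) (v : T -> R) (vmin : R).

Definition Ev : R := fine (\int[P]_t (v t)%:E).

Definition Dgap : \bar R := (\int[P]_t (Num.max 0 (v t - Ev))%:E)%E.

(* A distribution G in \mathcal G is represented by its probability measure
   mu on R (Borel); its cdf is G(x) = mu(]-oo, x]). *)
Definition Gcdf (mu : probability R R) (x : R) : R := fine (mu [set` `]-oo, x]]).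

Definition Ghat (mu : probability R R) (x : R) : \bar R :=
  (\int[lebesgue_measure]_(r in [set` `[vmin, x]]) (Gcdf mu r)%:E)%E.

Definition Ucoop (mu : probability R R) : \bar R :=
  (\int[P]_t ereal_sup (range (fun b : R =>
     (\int[mu]_(r in [set` `[vmin, b]]) (v t - r)%:E)%E)))%E.

Definition Uheur (mu : probability R R) : \bar R :=
  ereal_sup (range (fun b : R =>
     (\int[mu]_(r in [set` `[vmin, b]]) (Ev - r)%:E)%E)).

Definition truthful (mu : probability R R) (c : R) : Prop :=
  (Ucoop mu - Uheur mu > c%:E)%E.

Definition Lnet (mu : probability R R) : \bar R :=
  (\int[P]_t (\int[mu]_(r in [set` `[vmin, v t]]) (v t - r)%:E)%E)%E.

End Mechanism.

(* Main.v *)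
Require Import Defs.
From HB Require Import structures.
From mathcomp Require Import all_boot all_order all_algebra.
From mathcomp Require Import all_classical all_reals all_analysis.
From mathcomp Require Import measurable_realfun.
Import Order.TTheory GRing.Theory Num.Theory.
Local Open Scope classical_set_scope.
Local Open Scope ring_scope.
From mathcomp Require Import lra.
Section S.
Context (R : realType).
Local Open Scope ereal_scope.

Lemma mlin (x : R) (D : set R) : measurable_fun D (fun r : R => (x - r)%:E).
Proof.
apply/measurable_EFinP; apply: measurable_funB => //.
Qed.

Lemma le_int_b (mu : {measure set R -> \bar R}) (vmin x b : R) (hx : (vmin <= x)%R) :
  \int[mu]_(r in [set` `[vmin, b]]) (x - r)%:E <=
  \int[mu]_(r in [set` `[vmin, x]]) (x - r)%:E.
Proof.
rewrite (integral_mkcond [set` `[vmin, b]]) (integral_mkcond [set` `[vmin, x]]).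
set f := _ \_ _; set g := _ \_ _.
have mf : measurable_fun setT f by exact: ((measurable_restrictT _ (measurable_itv _)).1 (mlin _ _)).
have mg : measurable_fun setT g by exact: ((measurable_restrictT _ (measurable_itv _)).1 (mlin _ _)).
have fg : {in setT, forall r, f r <= g r}.
  have P0 : (point : \bar R) = 0 by [].
  move=> r _; rewrite /f /g /patch !mem_setE /= !in_itv /=.
  case: (boolP (vmin <= r)%R) => //= h1.
  case: (boolP (r <= b)%R) => h2; case: (boolP (r <= x)%R) => h3 /=.
  all: rewrite ?P0 //.
  - by rewrite lee_fin subr_le0 ltW // ltNge.
  - by rewrite lee_fin subr_ge0.
rewrite integralE [leRHS]integralE leeB //.
- apply: ge0_le_integral => //; try exact: measurable_funepos;
    try (by move=> ? _; exact: funepos_ge0);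
    by move=> r _; apply: funepos_le fg _ _; rewrite inE.
- apply: ge0_le_integral => //; try exact: measurable_funeneg;
    try (by move=> ? _; exact: funeneg_ge0);
    by move=> r _; apply: funeneg_le fg _ _; rewrite inE.
Qed.

Lemma sup_eq (mu : {measure set R -> \bar R}) (vmin x : R) (hx : (vmin <= x)%R) :
  ereal_sup (range (fun b : R => \int[mu]_(r in [set` `[vmin, b]]) (x - r)%:E)) =
  \int[mu]_(r in [set` `[vmin, x]]) (x - r)%:E.
Proof.
apply/eqP; rewrite eq_le; apply/andP; split.
  by apply: ge_ereal_sup => _ [b _ <-]; exact: le_int_b.
by apply: ereal_sup_ubound; exists x.
Qed.
Lemma mtrue : measurable [set true]. Proof. by []. Qed.

Lemma fub (mu : probability R R) (vmin x : R) (hx : (vmin <= x)%R)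
  (h0 : mu [set` `]-oo, vmin[] = 0) :
  \int[mu]_(r in [set` `[vmin, x]]) (x - r)%:E =
  \int[@lebesgue_measure R]_(s in [set` `[vmin, x]]) (fine (mu [set` `]-oo, s]]))%:E.
Proof.
pose b (z : R * measurableTypeR R) := [&& (vmin <= z.1)%R, (z.1 <= z.2)%R & (z.2 <= x)%R].
pose A := [set z | b z].
have memA z : (z \in A) = b z.
  by apply/idP/idP => [/set_mem //|h]; apply/mem_set.
have mb : measurable_fun setT b.
  apply: measurable_and; first exact: measurable_fun_ler.
  apply: measurable_and; exact: measurable_fun_ler.
have mA : measurable A.
  by have := mb measurableT [set true] mtrue; rewrite setTI.
have mf : measurable_fun setT (EFin \o (\1_A : _ -> R)).
  by apply/measurable_EFinP; exact: measurable_indic.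
have := fubini_tonelli (m1:=mu) (m2:=@lebesgue_measure R) (EFin \o (\1_A : _ -> R)) mf.
move=> /(_ (fun z => ltac:(by rewrite /= lee_fin))).
move=> FT.
have P0 : (point : \bar R) = 0 by [].
rewrite integral_mkcond [RHS]integral_mkcond.
transitivity (\int[mu]_r \int[@lebesgue_measure R]_s (EFin \o (\1_A : _ -> R)) (r, s)).
  apply: eq_integral => r _; rewrite /patch mem_setE /= in_itv /=.
  case: (boolP ((vmin <= r) && (r <= x))%R) => hr.
    rewrite (eq_integral (fun s : measurableTypeR R => (\1_[set` `[r, x]] s)%:E)); last first.
      move=> s _; rewrite /= !indicE memA mem_setE /= in_itv /=.
      by case/andP: hr => h1 _; rewrite /b /= h1.
    rewrite (@integral_indic _ (measurableTypeR R) R lebesgue_measure setT measurableT) // setIT.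
    have := @lebesgue_measure_itv R `[r, x]; rewrite /= => ->.
    case/andP: hr => _; rewrite le_eqVlt => /orP [/eqP ->|rx]; first by rewrite ?ltxx ?lte_fin ?ltxx subrr.
    by rewrite ?lte_fin rx.
  rewrite P0 (eq_integral (cst 0%E)) ?integral0 //.
  move=> s _; rewrite /= indicE memA /b /=.
  case: (boolP (vmin <= r)%R) hr => //= h1 hr.
  case: (boolP (r <= s)%R) => //= h2; case: (boolP (s <= x)%R) => //= h3.
  by move: hr; rewrite (le_trans h2 h3).
rewrite FT; apply: eq_integral => s _; rewrite /patch mem_setE /= in_itv /=.
case: (boolP ((vmin <= s) && (s <= x))%R) => hs.
  rewrite (eq_integral (fun r => (\1_[set` `[vmin, s]] r)%:E)); last first.
    move=> r _; rewrite /= !indicE memA mem_setE /= in_itv /=.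
    by case/andP: hs => _ hsx; rewrite /b /= hsx andbT.
  rewrite (@integral_indic _ _ R mu setT measurableT) // setIT.
  have e : mu [set` `]-oo, s]] = mu [set` `[vmin, s]].
    apply/eqP; rewrite eq_le; apply/andP; split.
      apply: (@le_trans _ _ (mu ([set` `]-oo, vmin[] `|` [set` `[vmin, s]]))).
        apply: le_measure; rewrite ?inE //; first exact: measurableU.
        move=> r /=; rewrite !in_itv /= => rs.
        by case: (ltP r vmin) => h; [left|right; rewrite rs].
      apply: (le_trans (measureU2 mu _ _)) => //.
      by rewrite [X in X + _ <= _](_ : _ = 0) ?add0e //; exact: h0.
    apply: le_measure; rewrite ?inE //.
    by move=> r /=; rewrite ?in_itv /= => /andP[].
  by rewrite e fineK // fin_num_measure.
rewrite P0 (eq_integral (cst 0%E)) ?integral0 //.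
move=> r _; rewrite /= indicE memA /b /=.
case: (boolP (vmin <= r)%R) => //= h1.
case: (boolP (r <= s)%R) => //= h2; case: (boolP (s <= x)%R) => //= h3.
by move: hs; rewrite (le_trans h1 h2) h3.
Qed.

Lemma mix (mu : probability R R) (p q a c : R) (hp : (0 <= p)%R) (hq : (0 <= q)%R)
  (hmu : forall A : set R, measurable A -> mu A = p%:E * \d_a A + q%:E * \d_c A)
  (D : set R) (mD : measurable D) (f : R -> \bar R) (mf : measurable_fun D f)
  (f0 : forall x, D x -> 0 <= f x) :
  \int[mu]_(x in D) f x = p%:E * (\d_a D * f a) + q%:E * (\d_c D * f c).
Proof.
rewrite (eq_measure_integral (measure_add (mscale (NngNum hp) \d_a) (mscale (NngNum hq) \d_c))); last first.
  move=> A mA _; transitivity (p%:E * \d_a A + q%:E * \d_c A); first exact: hmu.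
  by symmetry; exact: measure_addE.
rewrite (@ge0_integral_measure_add _ _ R (mscale (NngNum hp) \d_a) (mscale (NngNum hq) \d_c) D mD f f0 mf).
rewrite !ge0_integral_mscale // !integral_dirac //.
Qed.


Lemma le_intD (mu : {measure set R -> \bar R}) (D : set R) (mD : measurable D)
  (f g : R -> \bar R) (mf : measurable_fun D f) (mg : measurable_fun D g)
  (fg : {in D, forall x, f x <= g x}) :
  \int[mu]_(x in D) f x <= \int[mu]_(x in D) g x.
Proof.
rewrite integralE [leRHS]integralE leeB //.
- apply: ge0_le_integral => //; try exact: measurable_funepos;
    try (by move=> ? _; exact: funepos_ge0);
    by move=> r Dr; apply: funepos_le fg _ _; apply/mem_set.
- apply: ge0_le_integral => //; try exact: measurable_funeneg;
    try (by move=> ? _; exact: funeneg_ge0);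
    by move=> r Dr; apply: funeneg_le fg _ _; apply/mem_set.
Qed.
End S.
Arguments mix {R mu p q a c}.

Theorem mainTheorem5 (R : realType) (d : measure_display) (T : measurableType d)
    (P : probability T R) (v : T -> R) (vmin vmax : R)
    (hvmin : 0 <= vmin) (hv : vmin < vmax)
    (mv : measurable_fun setT v)
    (vsupp : forall t, vmin <= v t <= vmax) :
  (forall mu : probability R R, mu [set` `[vmin, vmax]] = 1%E ->
     Lnet P v vmin mu = Ucoop P v vmin mu /\
     Ucoop P v vmin mu = (\int[P]_t Ghat vmin mu (v t))%E) /\
  (forall c' : R, (0 < Dgap P v)%E -> 0 < c' -> (c'%:E <= Dgap P v)%E ->
   forall mu : probability R R,
     (forall A : set R, measurable A ->
        mu A = ((c' / fine (Dgap P v))%:E * \d_(Ev P v) A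
               + (1 - c' / fine (Dgap P v))%:E * \d_vmax A)%E) ->
     Ucoop P v vmin mu = c'%:E /\
     Uheur P v vmin mu = 0%E /\
     (Ucoop P v vmin mu - Uheur P v vmin mu)%E = c'%:E /\
     (forall c : R, c < c' -> truthful P v vmin mu c) /\
     Lnet P v vmin mu = c'%:E).
Proof.
have vx t : vmin <= v t by case/andP: (vsupp t).
have vX t : v t <= vmax by case/andP: (vsupp t).
have gen : forall mu : probability R R, mu [set` `[vmin, vmax]] = 1%E ->
     Lnet P v vmin mu = Ucoop P v vmin mu /\
     Ucoop P v vmin mu = (\int[P]_t Ghat vmin mu (v t))%E.
  move=> mu h1.
  have h0 : mu [set` `]-oo, vmin[] = 0%E.
    apply/eqP; rewrite eq_le measure_ge0 andbT.
    apply: (@le_trans _ _ (mu (~` [set` `[vmin, vmax]]))).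
      apply: le_measure; rewrite ?inE //; first exact: measurableC.
      move=> r /=; rewrite !in_itv /= => rv /andP[h _].
      by move: rv; rewrite ltNge h.
    by rewrite probability_setC // h1 subee.
  split.
    by rewrite /Lnet /Ucoop; apply: eq_integral => t _; rewrite sup_eq.
  rewrite /Ucoop; apply: eq_integral => t _; rewrite sup_eq // fub //.
split; first exact: gen.
move=> c' Dpos c'pos c'le mu hmu.
have mvE : measurable_fun setT (fun t => (v t)%:E) by apply/measurable_EFinP.
have Ilo : (vmin%:E <= \int[P]_t (v t)%:E)%E.
  rewrite -[X in (X <= _)%E]mule1 -(probability_setT P) -integral_cst //.
  by apply: ge0_le_integral => // t _; rewrite lee_fin.
have Ihi : (\int[P]_t (v t)%:E <= vmax%:E)%E.
  rewrite -[X in (_ <= X)%E]mule1 -(probability_setT P) -integral_cst //.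
  apply: ge0_le_integral => //; first by move=> t _; rewrite lee_fin (le_trans hvmin).
  by move=> t _; rewrite lee_fin.
have EvE : ((Ev P v)%:E = \int[P]_t (v t)%:E)%E.
  rewrite /Ev fineK // ge0_fin_numE; last by apply: le_trans Ilo; rewrite lee_fin.
  by apply: le_lt_trans Ihi _; rewrite ltry.
have Evmin : vmin <= Ev P v by rewrite -lee_fin EvE.
have Evmax : Ev P v <= vmax by rewrite -lee_fin EvE.
set E := Ev P v.
have mM : measurable_fun setT (fun t => (Num.max 0 (v t - E))%:E).
  apply/measurable_EFinP; apply: measurable_maxr => //; exact: measurable_funB.
have Dle : (Dgap P v <= (vmax - vmin)%:E)%E.
  rewrite -[X in (_ <= X)%E]mule1 -(probability_setT P) -integral_cst //.
  apply: ge0_le_integral => //; first by move=> t _; rewrite lee_fin le_max lexx.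
  move=> t _; rewrite lee_fin ge_max subr_ge0 (ltW hv) /=.
  by apply: lerB.
have Dfin : Dgap P v \is a fin_num.
  by rewrite ge0_fin_numE ?(ltW Dpos) // (le_lt_trans Dle) ?ltry.
have DfE : (fine (Dgap P v))%:E = Dgap P v by rewrite fineK.
have Dfpos : 0 < fine (Dgap P v) by rewrite -lte_fin DfE.
set Df := fine (Dgap P v) in DfE Dfpos hmu.
set p := c' / Df in hmu.
have hp : 0 <= p by rewrite divr_ge0 // ltW.
have hq : 0 <= 1 - p by rewrite subr_ge0 ler_pdivrMr // mul1r -lee_fin DfE.
have hmu1 : mu [set` `[vmin, vmax]] = 1%E.
  rewrite hmu // !diracE.
  have -> : (E \in [set` `[vmin, vmax]]) = true.
    by apply/mem_set; rewrite /= in_itv /= Evmin Evmax.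
  have -> : (vmax \in [set` `[vmin, vmax]]) = true.
    by apply/mem_set; rewrite /= in_itv /= (ltW hv) lexx.
  by rewrite !mule1 -EFinD addrC subrK.
have [LU UG] := gen mu hmu1.
have Lval : Lnet P v vmin mu = c'%:E.
  rewrite /Lnet (eq_integral (fun t => (p%:E * (Num.max 0 (v t - E))%:E)%E)); last first.
    move=> t _; rewrite (mix hp hq hmu) //; last 2 first.
    - exact: mlin.
    - by move=> r; rewrite /= in_itv /= => /andP[_ h]; rewrite lee_fin subr_ge0.
    rewrite !diracE.
    have -> : ((vmax \in [set` `[vmin, v t]])%:R%:E * (v t - vmax)%:E = 0)%E.
      case: (boolP (vmax \in _)) => h; last by rewrite /= mulr0n mul0e.
      have h' : vmax <= v t by move/set_mem: h; rewrite /= in_itv /= => /andP[].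
      have -> : v t = vmax by apply/eqP; rewrite eq_le vX h'.
      by rewrite subrr mule0.
    rewrite mule0 adde0; congr (_ * _)%E.
    case: (leP E (v t)) => h.
      have -> : (E \in [set` `[vmin, v t]]) = true.
        by apply/mem_set; rewrite /= in_itv /= Evmin h.
      by rewrite /= mulr1n mul1e max_r // subr_ge0.
    have -> : (E \in [set` `[vmin, v t]]) = false.
      by apply/memNset; rewrite /= in_itv /= => /andP[_ h']; move: h; rewrite ltNge h'.
    by rewrite /= mulr0n mul0e max_l // subr_le0 ltW.
  have M0 : forall t, setT t -> (0 <= (Num.max 0 (v t - E))%:E)%E.
    by move=> t _; rewrite lee_fin le_max lexx.
  rewrite (@ge0_integralZl_EFin _ _ R P setT measurableT (fun t => (Num.max 0 (v t - E))%:E) M0 mM p hp).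
  by rewrite -[X in (_ * X)%E]DfE -EFinM /p divfK // gt_eqF.
have Uc : Ucoop P v vmin mu = c'%:E by rewrite -LU.
have Uh : Uheur P v vmin mu = 0%E.
  rewrite /Uheur; apply/eqP; rewrite eq_le; apply/andP; split.
    apply: ge_ereal_sup => _ [b _ <-].
    apply: (@le_trans _ _ (\int[mu]_(r in [set` `[vmin, b]]) (Num.max 0 (E - r))%:E)%E).
      apply: le_intD => //; first exact: mlin.
        by apply/measurable_EFinP; apply: measurable_maxr => //; exact: measurable_funB.
      by move=> r _; rewrite lee_fin le_max lexx orbT.
    rewrite (mix hp hq hmu) //; last 2 first.
    - by apply/measurable_EFinP; apply: measurable_maxr => //; exact: measurable_funB.
    - by move=> r _; rewrite lee_fin le_max lexx.
    rewrite subrr maxxx (@max_l _ _ 0) ?subr_le0 //.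
    by rewrite !mule0 adde0.
  apply: ereal_sup_ubound; exists (vmin - 1) => //.
  rewrite (_ : [set` `[vmin, vmin - 1]] = set0) ?integral_set0 //.
  apply/seteqP; split => r //=; rewrite in_itv /= => /andP[h1 h2].
  by move: (le_trans h1 h2); lra.
split; first exact: Uc.
split; first exact: Uh.
split; first by rewrite Uc Uh sube0.
split; last exact: Lval.
by move=> c hc; rewrite /truthful Uc Uh sube0 lte_fin.
Qed.
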